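(* Let $n\ge 4$ and $2\le t\le n-2$, and suppose that the covariance matrix $\Sigma(t)=\mathsf{var}(\vec a(t))$ is invertible and that $\mathsf{var}(W_1(t))\ne \mathsf{cov}(W_1(t),W_2(t))$ and $\mathsf{var}(D_1(t))\ne\mathsf{cov}(D_1(t),D_2(t))$. Define \[ c_1(t)=\frac{\mathsf{var}(W_2(t))-\mathsf{cov}(W_1(t),W_2(t))}{\mathsf{var}(W_1(t))-\mathsf{cov}(W_1(t),W_2(t))},\qquad c_2(t)=\frac{\mathsf{var}(D_2(t))-\mathsf{cov}(D_1(t),D_2(t))}{\mathsf{var}(D_1(t))-\mathsf{cov}(D_1(t),D_2(t))}, \] and \[ W_{\mathrm{Diff}}(t)=W_1(t)-W_2(t),\quad D_{\mathrm{Diff}}(t)=D_1(t)-D_2(t),\quad W_{\mathrm{Sum}}(t)=c_1(t)W_1(t)+W_2(t),\quad D_{\mathrm{Sum}}(t)=c_2(t)D_1(t)+D_2(t). \] Then these four quantities have positive variance, their standardized versions $Z_{W_{\mathrm{Diff}}}(t),Z_{D_{\mathrm{Diff}}}(t),Z_{W_{\mathrm{Sum}}}(t),Z_{D_{\mathrm{Sum}}}(t)$ are pairwise uncorrelated under the permutation null, and \[ S(t)=Z_{W_{\mathrm{Diff}}}(t)^2+Z_{D_{\mathrm{Diff}}}(t)^2+Z_{W_{\mathrm{Sum}}}(t)^2+Z_{D_{\mathrm{Sum}}}(t)^2 . \]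
   Context: Let $G_1,\dots,G_n$ be a sequence of observations (networks) and let $K_1,K_2$ be two real symmetric $n\times n$ kernel matrices computed from this sequence, with $(i,j)$ entry $k_{xij}$ of $K_x$, $x\in\{1,2\}$. The permutation null distribution assigns probability $1/n!$ to each of the $n!$ permutations of the sequence, i.e. the kernel matrices $K_x$ are replaced by $(k_{x\pi(i)\pi(j)})_{i,j}$ for a uniformly random permutation $\pi$ of $\{1,\dots,n\}$ (the same $\pi$ for both kernels); $\mathsf{E},\mathsf{var},\mathsf{cov}$ denote expectation, variance and covariance under this distribution. For a quantity $T$, its standardized version is $Z_T=(T-\mathsf{E}T)/\sqrt{\mathsf{var}(T)}$. For $x\in\{1,2\}$ define \[ \alpha_x(t)=\frac{1}{t(t-1)}\sum_{i=1}^n\sum_{j\ne i}k_{xij}\mathbb{1}\{i,j\le t\},\qquad \beta_x(t)=\frac{1}{(n-t)(n-t-1)}\sum_{i=1}^n\sum_{j\ne i}k_{xij}\mathbb{1}\{i,j> t\}, \] \[ W_x(t)=\frac{t}{n}\alpha_x(t)+\frac{n-t}{n}\beta_x(t),\qquad D_x(t)=\frac{t(t-1)}{n(n-1)}\alpha_x(t)-\frac{(n-t)(n-t-1)}{n(n-1)}\beta_x(t). \] Let $\vec a(t)=[\alpha_1(t),\beta_1(t),\alpha_2(t),\beta_2(t)]^{\mathsf T}$, $\Sigma(t)=\mathsf{var}(\vec a(t))$ (the $4\times4$ covariance matrix under the permutation null), and \[ S(t)=[\vec a(t)-\mathsf{E}\vec a(t)]^{\mathsf T}\Sigma(t)^{-1}[\vec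 a(t)-\mathsf{E}\vec a(t)]. \] *)

(* Defs.v *)
From mathcomp Require Import all_boot all_order all_algebra all_fingroup.
Set Implicit Arguments. Unset Strict Implicit. Unset Printing Implicit Defensive.
Import Order.TTheory GRing.Theory Num.Theory.
Local Open Scope ring_scope.

(* Observations are indexed by 'I_n; paper index i+1 corresponds to i : 'I_n,
   so "i <= t" in the paper is (val i < t) here, and "i > t" is (t <= val i). *)

Section Defs.
Variable R : rcfType.
Variable n : nat.

Definition permK (K : 'M[R]_n) (pi : 'S_n) : 'M[R]_n :=
  \matrix_(i, j) K (pi i) (pi j).

Definition alpha (K : 'M[R]_n) (t : nat) : R :=
  ((t * (t - 1))%:R)^-1 *
  \sum_(i < n) \sum_(j < n | (j != i) && (i < t)%N && (j < t)%N) K i j.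

Definition beta (K : 'M[R]_n) (t : nat) : R :=
  (((n - t) * (n - t - 1))%:R)^-1 *
  \sum_(i < n) \sum_(j < n | (j != i) && (t <= i)%N && (t <= j)%N) K i j.

Definition Wstat (K : 'M[R]_n) (t : nat) : R :=
  (t%:R / n%:R) * alpha K t + ((n - t)%:R / n%:R) * beta K t.

Definition Dstat (K : 'M[R]_n) (t : nat) : R :=
  ((t * (t - 1))%:R / (n * (n - 1))%:R) * alpha K t
  - (((n - t) * (n - t - 1))%:R / (n * (n - 1))%:R) * beta K t.

(* random variables under the permutation null: functions of pi : 'S_n,
   each permutation having probability 1/n! *)
Definition Ex (X : 'S_n -> R) : R := (n`!%:R)^-1 * \sum_(pi : 'S_n) X pi.
Definition Cov (X Y : 'S_n -> R) : R :=
  Ex (fun pi => (X pi - Ex X) * (Y pi - Ex Y)).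
Definition Var (X : 'S_n -> R) : R := Cov X X.

Definition Zstd (X : 'S_n -> R) : 'S_n -> R :=
  fun pi => (X pi - Ex X) / Num.sqrt (Var X).

Definition alphaRV K t : 'S_n -> R := fun pi => alpha (permK K pi) t.
Definition betaRV K t : 'S_n -> R := fun pi => beta (permK K pi) t.
Definition WRV K t : 'S_n -> R := fun pi => Wstat (permK K pi) t.
Definition DRV K t : 'S_n -> R := fun pi => Dstat (permK K pi) t.

Definition acomp (K1 K2 : 'M[R]_n) (t : nat) (k : 'I_4) : 'S_n -> R :=
  match val k with
  | 0 => alphaRV K1 t
  | 1 => betaRV K1 t
  | 2 => alphaRV K2 t
  | _ => betaRV K2 t
  end.

Definition Sigma (K1 K2 : 'M[R]_n) (t : nat) : 'M[R]_4 :=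
  \matrix_(k, l) Cov (acomp K1 K2 t k) (acomp K1 K2 t l).

Definition Sstat (K1 K2 : 'M[R]_n) (t : nat) (pi : 'S_n) : R :=
  let d : 'cV[R]_4 := \col_k (acomp K1 K2 t k pi - Ex (acomp K1 K2 t k)) in
  ((d^T *m invmx (Sigma K1 K2 t) *m d) ord0 ord0).

End Defs.

(* Main.v *)
Require Import Defs.
From mathcomp Require Import all_boot all_order all_algebra all_fingroup.
From mathcomp Require Import ring lra zify.
Import Order.TTheory GRing.Theory Num.Theory.
Local Open Scope ring_scope.


Lemma sum_shift (R : nmodType) n (F : 'S_n -> R) (s : 'S_n) :
  \sum_(p : 'S_n) F p = \sum_(p : 'S_n) F (s * p)%g.
Proof. by rewrite (reindex_inj (mulgI s)). Qed.

Lemma ext_step n (s : 'S_n) k k' : exists s' : 'S_n,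
  s' k = k' /\ forall x, s x != s k -> s x != k' -> s' x = s x.
Proof.
exists (s * tperm (s k) k')%g; split; first by rewrite permM tpermL.
by move=> x h1 h2; rewrite permM tpermD // eq_sym.
Qed.

Lemma ext3 n (i j k i' j' k' : 'I_n) : i != j -> i != k -> j != k ->
  i' != j' -> i' != k' -> j' != k' ->
  exists s : 'S_n, [/\ s i = i', s j = j' & s k = k'].
Proof.
move=> ij ik jk ij' ik' jk'.
have [s1 [e1 _]] := @ext_step n 1%g i i'.
have [s2 [e2 f2]] := @ext_step n s1 j j'.
have e21 : s2 i = i'.
  by rewrite f2 // ?e1 // -e1 (inj_eq perm_inj).
have [s3 [e3 f3]] := @ext_step n s2 k k'.
exists s3; split => //.
- by rewrite f3 // -?e21 ?(inj_eq perm_inj) // e21.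
- by rewrite f3 // -?e2 ?(inj_eq perm_inj) // e2.
Qed.

Lemma ext2 n (i j i' j' : 'I_n) : i != j -> i' != j' ->
  exists s : 'S_n, s i = i' /\ s j = j'.
Proof.
move=> ij ij'.
have [s1 [e1 _]] := @ext_step n 1%g i i'.
have [s2 [e2 f2]] := @ext_step n s1 j j'.
exists s2; split => //.
by rewrite f2 // ?e1 // -e1 (inj_eq perm_inj).
Qed.

Lemma pat1 (R : nmodType) n (G : 'I_n -> R) i i' :
  \sum_(p : 'S_n) G (p i) = \sum_(p : 'S_n) G (p i').
Proof.
have [s [e _]] := @ext_step n 1%g i i'.
by rewrite (@sum_shift _ _ _ s); apply: eq_bigr => p _; rewrite permM e.
Qed.

Lemma pat2 (R : nmodType) n (G : 'I_n -> 'I_n -> R) i j i' j' :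
  i != j -> i' != j' ->
  \sum_(p : 'S_n) G (p i) (p j) = \sum_(p : 'S_n) G (p i') (p j').
Proof.
move=> h h'; have [s [e1 e2]] := @ext2 n _ _ _ _ h h'.
by rewrite (@sum_shift _ _ _ s); apply: eq_bigr => p _; rewrite !permM e1 e2.
Qed.

Lemma pat3 (R : nmodType) n (G : 'I_n -> 'I_n -> 'I_n -> R) i j k i' j' k' :
  i != j -> i != k -> j != k -> i' != j' -> i' != k' -> j' != k' ->
  \sum_(p : 'S_n) G (p i) (p j) (p k) = \sum_(p : 'S_n) G (p i') (p j') (p k').
Proof.
move=> h1 h2 h3 h1' h2' h3'; have [s [e1 e2 e3]] := @ext3 n _ _ _ _ _ _ h1 h2 h3 h1' h2' h3'.
by rewrite (@sum_shift _ _ _ s); apply: eq_bigr => p _; rewrite !permM e1 e2 e3.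
Qed.

Lemma sum_ind1 (R : pzRingType) n t (f : bool -> R) : (t <= n)%N ->
  \sum_(i < n) f (i < t)%N = t%:R * f true + (n - t)%:R * f false.
Proof.
move=> tn.
rewrite -(big_mkord xpredT (fun i => f (i < t)%N)).
rewrite (big_cat_nat (leq0n t) tn) /=.
have e1 : \sum_(0 <= i < t) f (i < t)%N = \sum_(0 <= i < t) f true.
  apply: eq_big_nat => i /andP[_ h]. rewrite h. reflexivity.
have e2 : \sum_(t <= i < n) f (i < t)%N = \sum_(t <= i < n) f false.
  apply: eq_big_nat => i /andP[h _]. rewrite ltnNge h. reflexivity.
rewrite e1 e2 !sumr_const_nat subn0 !mulr_natl. reflexivity.
Qed.

Lemma sum_pick (R : pzRingType) n (i : 'I_n) (F : 'I_n -> R) :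
  \sum_(k < n) (k == i)%:R * F k = F i.
Proof.
rewrite (bigD1 i) //= eqxx mul1r big1 ?addr0 // => k /negbTE ->.
by rewrite mul0r.
Qed.

Lemma sum_neq (R : pzRingType) n (i : 'I_n) (F : 'I_n -> R) :
  \sum_(k < n) (k != i)%:R * F k = \sum_(k < n) F k - F i.
Proof.
rewrite (bigD1 i) //= [in RHS](bigD1 i) //= eqxx mul0r add0r addrAC subrr add0r.
by apply: eq_bigr => k ->; rewrite mul1r.
Qed.

Lemma sum_ind2 (R : comPzRingType) n t (f : bool -> bool -> R) :
  (1 <= t)%N -> (t < n)%N ->
  \sum_(i < n) \sum_(j < n) (j != i)%:R * f (i < t)%N (j < t)%N =
  (t * (t - 1))%:R * f true true + (t * (n - t))%:R * (f true false + f false true)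
  + ((n - t) * (n - t - 1))%:R * f false false.
Proof.
move=> t1 tn.
rewrite (eq_bigr (fun i : 'I_n => (t%:R * f (i < t)%N true + (n - t)%:R * f (i<t)%N false)
   - f (i < t)%N (i < t)%N)); last first.
  move=> i _; rewrite sum_neq. rewrite (@sum_ind1 _ n t (fun b => f (i < t)%N b)); last exact: ltnW. reflexivity.
rewrite (@sum_ind1 _ n t (fun b => (t%:R * f b true + (n - t)%:R * f b false) - f b b)); last exact: ltnW.
have h1 : (1 <= n - t)%N by rewrite subn_gt0.
rewrite !natrM !natrB.
all: first [exact: h1 | exact: t1 | exact: (ltnW tn) | ring].
Qed.

Set Implicit Arguments. Unset Strict Implicit. Unset Printing Implicit Defensive.

Definition rs (R : pzRingType) n (K : 'M[R]_n) (a : 'I_n) : R :=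
  \sum_(b < n) (b != a)%:R * K a b.

Definition Aw (R : pzRingType) n (K : 'M[R]_n) t (w : bool -> R) (p : 'S_n) : R :=
  \sum_(i < n) \sum_(j < n) (j != i)%:R * (w (i < t)%N * (w (j < t)%N * K (p i) (p j))).

Lemma alpha_eq (R : rcfType) n (K : 'M[R]_n) t p :
  alpha (Defs.permK K p) t = ((t * (t - 1))%:R)^-1 * Aw K t (fun b => (b : nat)%:R) p.
Proof.
rewrite /alpha /Aw; congr (_ * _); apply: eq_bigr => i _.
rewrite big_mkcond; apply: eq_bigr => j _; rewrite mxE.
case: (j != i); case: (i < t)%N; case: (j < t)%N; rewrite /=; ring.
Qed.

Lemma beta_eq (R : rcfType) n (K : 'M[R]_n) t p :
  beta (Defs.permK K p) t = (((n - t) * (n - t - 1))%:R)^-1 * Aw K t (fun b => (~~ b : nat)%:R) p.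
Proof.
rewrite /beta /Aw; congr (_ * _); apply: eq_bigr => i _.
rewrite big_mkcond; apply: eq_bigr => j _; rewrite mxE (leqNgt t i) (leqNgt t j).
case: (j != i); case: (i < t)%N; case: (j < t)%N; rewrite /=; ring.
Qed.

Lemma rs_perm (R : pzRingType) n (K : 'M[R]_n) (p : 'S_n) k :
  rs K (p k) = \sum_(j < n) (j != k)%:R * K (p k) (p j).
Proof.
rewrite /rs (reindex_inj (@perm_inj _ p)); apply: eq_bigr => j _.
by rewrite (inj_eq perm_inj).
Qed.

Lemma rs_tot (R : pzRingType) n (K : 'M[R]_n) (p : 'S_n) :
  \sum_(a < n) rs K a = \sum_(k < n) rs K (p k).
Proof. exact: (reindex_inj (@perm_inj _ p)). Qed.

Lemma Ksym (R : pzRingType) n (K : 'M[R]_n) a b : K^T = K -> K a b = K b a.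
Proof. by move=> hK; rewrite -{1}hK mxE. Qed.

Lemma D_eq (R : rcfType) n (K : 'M[R]_n) t p : K^T = K ->
  Aw K t (fun b => (b : nat)%:R) p - Aw K t (fun b => (~~ b : nat)%:R) p =
  2 * \sum_(k < n) ((k < t)%N : nat)%:R * rs K (p k) - \sum_(a < n) rs K a.
Proof.
move=> hK.
set G := fun i j : 'I_n => (j != i)%:R * K (p i) (p j).
set ind := fun i : 'I_n => ((i < t)%N : nat)%:R : R.
have eZ : 2 * \sum_(k < n) ((k < t)%N : nat)%:R * rs K (p k) =
    \sum_(i < n) \sum_(j < n) G i j * (2 * ind i).
  rewrite mulr_sumr; apply: eq_bigr => i _; rewrite rs_perm !mulr_sumr.
  apply: eq_bigr => j _; rewrite /G /ind; ring.
have eW : \sum_(a < n) rs K a = \sum_(i < n) \sum_(j < n) G i j.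
  rewrite (rs_tot K p); apply: eq_bigr => i _; exact: rs_perm.
have hsym : \sum_(i < n) \sum_(j < n) G i j * ind j =
            \sum_(i < n) \sum_(j < n) G i j * ind i.
  rewrite exchange_big; apply: eq_bigr => i _; apply: eq_bigr => j _.
  by rewrite /G (Ksym _ _ hK) eq_sym.
rewrite eZ eW /Aw; apply/eqP; rewrite -subr_eq0; apply/eqP.
rewrite -!sumrB.
rewrite (eq_bigr (fun i => \sum_(j < n) (G i j * ind j - G i j * ind i))); last first.
  move=> i _; rewrite -!sumrB; apply: eq_bigr => j _; rewrite /G /ind.
  case: (i < t)%N; case: (j < t)%N; rewrite /=; ring.
rewrite (eq_bigr (fun i => \sum_(j < n) G i j * ind j - \sum_(j < n) G i j * ind i)); last first.
  move=> i _; exact: sumrB.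
rewrite sumrB hsym subrr; reflexivity.
Qed.

Definition Xs (R : pzRingType) n (K1 K2 : 'M[R]_n) (i j k : 'I_n) : R :=
  \sum_(p : 'S_n) K1 (p i) (p j) * rs K2 (p k).

Lemma Xs_pat (R : comPzRingType) n (K1 K2 : 'M[R]_n) (o0 o1 o2 : 'I_n) :
  K1^T = K1 -> o0 != o1 -> o0 != o2 -> o1 != o2 ->
  forall i j k, j != i -> Xs K1 K2 i j k = Xs K1 K2 o0 o1 o2
     + (k == i)%:R * (Xs K1 K2 o0 o1 o0 - Xs K1 K2 o0 o1 o2)
     + (k == j)%:R * (Xs K1 K2 o0 o1 o0 - Xs K1 K2 o0 o1 o2).
Proof.
move=> hK d01 d02 d12 i j k hji.
case: (eqVneq k i) => [-> | hki].
  rewrite eq_sym (negbTE hji) /=.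
  have -> : Xs K1 K2 i j i = Xs K1 K2 o0 o1 o0.
    rewrite /Xs (@pat2 _ _ (fun a b => K1 a b * rs K2 a) i j o0 o1) //.
    by rewrite eq_sym.
  rewrite /=; ring.
case: (eqVneq k j) => [-> | hkj].
  rewrite /=.
  have -> : Xs K1 K2 i j j = Xs K1 K2 o0 o1 o0.
    rewrite /Xs.
    rewrite (eq_bigr (fun p : 'S_n => K1 (p j) (p i) * rs K2 (p j))); last first.
      by move=> p _; rewrite (Ksym _ _ hK).
    by rewrite (@pat2 _ _ (fun a b => K1 a b * rs K2 a) j i o0 o1).
  rewrite /=; ring.
rewrite !mul0r !addr0 /Xs.
rewrite (@pat3 _ _ (fun a b c => K1 a b * rs K2 c) i j k o0 o1 o2) //.
- by rewrite eq_sym.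
- by rewrite eq_sym.
- by rewrite eq_sym.
Qed.

Lemma sum_Aw (R : comPzRingType) n (K : 'M[R]_n) t (w : bool -> R) :
  \sum_(p : 'S_n) Aw K t w p = \sum_(i < n) \sum_(j < n) (j != i)%:R *
      (w (i < t)%N * (w (j < t)%N * \sum_(p : 'S_n) K (p i) (p j))).
Proof.
rewrite /Aw exchange_big; apply: eq_bigr => i _; rewrite exchange_big.
apply: eq_bigr => j _; rewrite !mulr_sumr; apply: eq_bigr => p _; reflexivity.
Qed.

Lemma sum_AwR (R : comPzRingType) n (K1 K2 : 'M[R]_n) t (w : bool -> R) (d : 'I_n -> R) :
  \sum_(p : 'S_n) Aw K1 t w p * (\sum_(k < n) d k * rs K2 (p k)) =
  \sum_(i < n) \sum_(j < n) (j != i)%:R *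
      (w (i < t)%N * (w (j < t)%N * \sum_(k < n) d k * Xs K1 K2 i j k)).
Proof.
rewrite /Aw.
rewrite (eq_bigr (fun p : 'S_n => \sum_(i < n) \sum_(j < n) \sum_(k < n)
   (j != i)%:R * (w (i < t)%N * (w (j < t)%N * (d k * (K1 (p i) (p j) * rs K2 (p k))))))); last first.
  move=> p _; rewrite mulr_suml; apply: eq_bigr => i _; rewrite mulr_suml.
  apply: eq_bigr => j _; rewrite mulr_sumr; apply: eq_bigr => k _; ring.
rewrite exchange_big; apply: eq_bigr => i _; rewrite exchange_big.
apply: eq_bigr => j _; rewrite exchange_big !mulr_sumr; apply: eq_bigr => k _.
rewrite /Xs !mulr_sumr; apply: eq_bigr => p _; ring.
Qed.


Lemma core (R : rcfType) n (K1 K2 : 'M[R]_n) t :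
  (4 <= n)%N -> (2 <= t)%N -> (t <= n - 2)%N -> K1^T = K1 ->
  Ex (fun p => WRV K1 t p * \sum_(k < n) ((k < t)%N : nat)%:R * rs K2 (p k)) =
  Ex (WRV K1 t) * Ex (fun p : 'S_n => \sum_(k < n) ((k < t)%N : nat)%:R * rs K2 (p k)).
Proof.
move=> n4 t2 tn hK.
have n0 : (0 < n)%N by apply: leq_trans n4.
have n1 : (1 < n)%N by apply: leq_trans n4.
have n2 : (2 < n)%N by apply: leq_trans n4.
pose o0 : 'I_n := Ordinal n0.
pose o1 : 'I_n := Ordinal n1.
pose o2 : 'I_n := Ordinal n2.
have d01 : o0 != o1 by [].
have d02 : o0 != o2 by [].
have d12 : o1 != o2 by [].
have d10 : o1 != o0 by [].
set ind := fun i : 'I_n => ((i < t)%N : nat)%:R : R.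
set U := \sum_(p : 'S_n) K1 (p o0) (p o1).
set Y := Xs K1 K2 o0 o1 o0.
set Z := Xs K1 K2 o0 o1 o2.
set E := Y - Z.
set T2 := \sum_(a < n) rs K2 a.
set V := \sum_(p : 'S_n) rs K2 (p o0).
have hU : forall i j : 'I_n, j != i -> \sum_(p : 'S_n) K1 (p i) (p j) = U.
  move=> i j h; rewrite /U (@pat2 _ _ (fun a b => K1 a b) i j o0 o1) //.
  by rewrite eq_sym.
have hX := @Xs_pat _ _ K1 K2 o0 o1 o2 hK d01 d02 d12.
have rel1 : n%:R * Z + 2 * E = U * T2.
  have e1 : \sum_(k < n) Xs K1 K2 o0 o1 k = U * T2.
    rewrite /Xs exchange_big /U mulr_suml; apply: eq_bigr => p _.
    rewrite -mulr_sumr /T2 (rs_tot K2 p); reflexivity.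
  rewrite -e1 (eq_bigr _ (fun k _ => hX o0 o1 k d10)).
  rewrite !big_split /= (@sum_pick _ _ o0 (fun=> E)) (@sum_pick _ _ o1 (fun=> E)).
  rewrite sumr_const card_ord -[Xs _ _ _ _ _ *+ n]mulr_natl /E /Y /Z; ring.
have rel2 : n%:R * V = n`!%:R * T2.
  have e3 : \sum_(k < n) \sum_(p : 'S_n) rs K2 (p k) = T2 *+ n`!.
    rewrite exchange_big (eq_bigr (fun=> T2)); first by rewrite sumr_const card_Sn.
    move=> p _; rewrite /T2 (rs_tot K2 p); reflexivity.
  have e2 : \sum_(k < n) \sum_(p : 'S_n) rs K2 (p k) = V *+ n.
    rewrite (eq_bigr (fun=> V)); first by rewrite sumr_const card_ord.
    move=> k _; exact: (@pat1 _ _ (fun a => rs K2 a) k o0).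
  rewrite mulr_natl -e2 e3 mulr_natl; reflexivity.
have t1 : (1 <= t)%N by apply: leq_trans t2.
have tlt : (t < n)%N.
  have h : (n - 2 < n)%N by rewrite ltn_subrL.
  exact: leq_ltn_trans tn h.
have hSR : \sum_(p : 'S_n) \sum_(k < n) ind k * rs K2 (p k) = t%:R * V.
  rewrite exchange_big (eq_bigr (fun k => ind k * V)).
    rewrite (@sum_ind1 _ n t (fun b => (b : nat)%:R * V)); last exact: ltnW.
    rewrite /=; ring.
  move=> k _; rewrite -mulr_sumr (@pat1 _ _ (fun a => rs K2 a) k o0); reflexivity.
have hSA : forall w : bool -> R, \sum_(p : 'S_n) Aw K1 t w p =
   ((t * (t - 1))%:R * (w true * (w true * U)) + (t * (n - t))%:R * (w true * (w false * U)
     + w false * (w true * U)) + ((n - t) * (n - t - 1))%:R * (w false * (w false * U))).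
  move=> w; rewrite sum_Aw.
  rewrite (eq_bigr (fun i : 'I_n => \sum_(j < n) (j != i)%:R * (w (i < t)%N * (w (j < t)%N * U)))).
    exact: (@sum_ind2 _ n t (fun b c => w b * (w c * U)) t1 tlt).
  move=> i _; apply: eq_bigr => j _; case: (eqVneq j i) => [->|h].
    rewrite /= !mul0r; reflexivity.
  rewrite (hU i j h); reflexivity.
have hS : forall i j : 'I_n, j != i ->
    \sum_(k < n) ind k * Xs K1 K2 i j k = t%:R * Z + (ind i + ind j) * E.
  move=> i j h.
  rewrite (eq_bigr (fun k => Z * ind k + (k == i)%:R * (ind k * E) + (k == j)%:R * (ind k * E))); last first.
    move=> k _; rewrite (hX i j k h) /E /Y /Z; ring.
  rewrite !big_split /= (@sum_pick _ _ i (fun k => ind k * E)) (@sum_pick _ _ j (fun k => ind k * E)).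
  rewrite -mulr_sumr (@sum_ind1 _ n t (fun b => (b : nat)%:R)); last exact: ltnW.
  rewrite /=; ring.
have hSAR : forall w : bool -> R,
  \sum_(p : 'S_n) Aw K1 t w p * (\sum_(k < n) ind k * rs K2 (p k)) =
   ((t * (t - 1))%:R * (w true * (w true * (t%:R * Z + 2 * E)))
    + (t * (n - t))%:R * (w true * (w false * (t%:R * Z + E))
     + w false * (w true * (t%:R * Z + E)))
    + ((n - t) * (n - t - 1))%:R * (w false * (w false * (t%:R * Z)))).
  move=> w; rewrite (@sum_AwR _ _ K1 K2 t w ind).
  rewrite (eq_bigr (fun i : 'I_n => \sum_(j < n) (j != i)%:R * (w (i < t)%N * (w (j < t)%N *
      (t%:R * Z + (((i < t)%N : nat)%:R + ((j < t)%N : nat)%:R) * E))))).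
    rewrite (@sum_ind2 _ n t (fun b c => w b * (w c * (t%:R * Z + ((b : nat)%:R + (c : nat)%:R) * E))) t1 tlt).
    rewrite /=; ring.
  move=> i _; apply: eq_bigr => j _; case: (eqVneq j i) => [->|h].
    rewrite /= !mul0r; reflexivity.
  rewrite (hS i j h); reflexivity.
pose a : R := t%:R / n%:R * ((t * (t - 1))%:R)^-1.
pose b : R := (n - t)%:R / n%:R * (((n - t) * (n - t - 1))%:R)^-1.
pose wi := fun b : bool => (b : nat)%:R : R.
pose wn := fun b : bool => (~~ b : nat)%:R : R.
have hW : forall p, WRV K1 t p = a * Aw K1 t wi p + b * Aw K1 t wn p.
  move=> p; rewrite /WRV /Wstat alpha_eq beta_eq /a /b; ring.
rewrite /Ex.
rewrite (eq_bigr (fun p => a * (Aw K1 t wi p * (\sum_(k < n) ind k * rs K2 (p k)))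
    + b * (Aw K1 t wn p * (\sum_(k < n) ind k * rs K2 (p k))))); last first.
  move=> p _; rewrite hW; ring.
rewrite big_split /= -!mulr_sumr hSAR hSAR.
rewrite (eq_bigr (fun p => a * Aw K1 t wi p + b * Aw K1 t wn p)); last first.
  move=> p _; exact: hW.
rewrite big_split /= -!mulr_sumr hSA hSA hSR.
have hE : E = (U * T2 - n%:R * Z) / 2.
  rewrite -rel1; field.
  exact isT.
have hV : V = n`!%:R * T2 / n%:R.
  rewrite -rel2; field.
  by rewrite pnatr_eq0 -lt0n.
rewrite hE hV /a /b /wi /wn /=.
have h1 : (1 <= n - t)%N by rewrite subn_gt0.
have tn1 : (0 < n - t - 1)%N by lia.
have ht0 : t%:R != 0 :> R by rewrite pnatr_eq0 -lt0n.
have ht1 : t%:R - 1 != 0 :> R.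
  rewrite subr_eq0 pnatr_eq1; lia.
have hnt : n%:R - t%:R != 0 :> R.
  rewrite subr_eq0 eqr_nat; lia.
have hnt1 : n%:R - t%:R - 1 != 0 :> R.
  rewrite -natrB; last exact: ltnW.
  rewrite subr_eq0 pnatr_eq1; lia.
have hn0 : n%:R != 0 :> R by rewrite pnatr_eq0 -lt0n.
have hf0 : n`!%:R != 0 :> R by rewrite pnatr_eq0 -lt0n fact_gt0.
rewrite !natrM !natrB.
all: first [exact: h1 | exact: t1 | exact: (ltnW tlt) | idtac].
field.
by rewrite hn0 hf0 hnt1 hnt ht1 ht0.
Qed.


Lemma Ex_ext (R : rcfType) n (X Y : 'S_n -> R) : (forall p, X p = Y p) -> Ex X = Ex Y.
Proof. by move=> h; rewrite /Ex; congr (_ * _); apply: eq_bigr => p _; rewrite h. Qed.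

Lemma Ex_add (R : rcfType) n (X Y : 'S_n -> R) :
  Ex (fun p => X p + Y p) = Ex X + Ex Y.
Proof. by rewrite /Ex big_split mulrDr. Qed.

Lemma Ex_scale (R : rcfType) n (c : R) (X : 'S_n -> R) :
  Ex (fun p => c * X p) = c * Ex X.
Proof. by rewrite /Ex -mulr_sumr mulrCA. Qed.

Lemma Ex_const (R : rcfType) n (c : R) : Ex (fun _ : 'S_n => c) = c.
Proof.
rewrite /Ex sumr_const card_Sn -[c *+ _]mulr_natl mulrA mulVf ?mul1r //.
by rewrite pnatr_eq0 -lt0n fact_gt0.
Qed.

Lemma Cov_alt (R : rcfType) n (X Y : 'S_n -> R) :
  Cov X Y = Ex (fun p => X p * Y p) - Ex X * Ex Y.
Proof.
rewrite /Cov (@Ex_ext _ _ _ (fun p => (X p * Y p + (- Ex Y) * X p) + ((- Ex X) * Y p + (Ex X * Ex Y))));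
  last by move=> p /=; ring.
rewrite !Ex_add (@Ex_const _ n (Ex X * Ex Y)) !Ex_scale; ring.
Qed.

Lemma Cov_sym (R : rcfType) n (X Y : 'S_n -> R) : Cov X Y = Cov Y X.
Proof. by rewrite /Cov; apply: Ex_ext => p; rewrite mulrC. Qed.

Lemma Cov_ext (R : rcfType) n (X X' Y Y' : 'S_n -> R) :
  (forall p, X p = X' p) -> (forall p, Y p = Y' p) -> Cov X Y = Cov X' Y'.
Proof.
move=> hX hY; rewrite !Cov_alt (Ex_ext hX) (Ex_ext hY).
by rewrite (@Ex_ext _ _ (fun p => X p * Y p) (fun p => X' p * Y' p)) // => p; rewrite hX hY.
Qed.

Lemma Cov_lin (R : rcfType) n (a b : R) (X Y Z : 'S_n -> R) :
  Cov (fun p => a * X p + b * Y p) Z = a * Cov X Z + b * Cov Y Z.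
Proof.
rewrite !Cov_alt Ex_add !Ex_scale.
rewrite (@Ex_ext _ _ _ (fun p => a * (X p * Z p) + b * (Y p * Z p))); last by move=> p /=; ring.
rewrite Ex_add !Ex_scale; ring.
Qed.

Lemma Cov_const (R : rcfType) n (c : R) (X : 'S_n -> R) :
  Cov (fun _ => c) X = 0.
Proof.
rewrite /Cov (@Ex_const _ n c) (@Ex_ext _ _ _ (fun _ => 0)); [exact: Ex_const | move=> p /=; ring].
Qed.

Lemma D_affine (R : rcfType) n (K : 'M[R]_n) t p :
  (2 <= t)%N -> (t <= n - 2)%N -> K^T = K ->
  DRV K t p = (2 / (n * (n - 1))%:R) * \sum_(k < n) ((k < t)%N : nat)%:R * rs K (p k)
    + (- (\sum_(a < n) rs K a) / (n * (n - 1))%:R).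
Proof.
move=> t2 tn hK.
rewrite /DRV /Dstat alpha_eq beta_eq.
have h1 : ((t * (t - 1))%:R : R) != 0 by rewrite pnatr_eq0 muln_eq0; apply/norP; split; lia.
have h2 : (((n - t) * (n - t - 1))%:R : R) != 0 by rewrite pnatr_eq0 muln_eq0; apply/norP; split; lia.
rewrite !mulrA (mulrAC _ _ (t * (t - 1))%:R^-1) divff // mul1r.
rewrite (mulrAC _ _ ((n - t) * (n - t - 1))%:R^-1) divff // mul1r.
rewrite -!mulrA -mulrBr (@D_eq _ _ K t p hK); ring.
Qed.

Lemma Cov_aff (R : rcfType) n (a b : R) (X Z : 'S_n -> R) :
  Cov (fun p => a * X p + b) Z = a * Cov X Z.
Proof.
rewrite !Cov_alt.
rewrite (@Ex_ext _ _ (fun p => (a * X p + b) * Z p) (fun p => a * (X p * Z p) + b * Z p));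
  last by move=> p /=; ring.
rewrite (@Ex_add _ _ (fun p => a * (X p * Z p)) (fun p => b * Z p)).
rewrite (@Ex_add _ _ (fun p => a * X p) (fun _ => b)) (@Ex_const _ n b).
rewrite (@Ex_scale _ _ a (fun p => X p * Z p)) (@Ex_scale _ _ b Z) (@Ex_scale _ _ a X); ring.
Qed.

Lemma cov_WD (R : rcfType) n (K1 K2 : 'M[R]_n) t :
  (4 <= n)%N -> (2 <= t)%N -> (t <= n - 2)%N -> K1^T = K1 -> K2^T = K2 ->
  Cov (WRV K1 t) (DRV K2 t) = 0.
Proof.
move=> n4 t2 tn h1 h2.
rewrite Cov_sym (Cov_ext (fun p => D_affine p t2 tn h2) (fun p => erefl)).
rewrite Cov_aff Cov_alt.
rewrite (@Ex_ext _ _ _ (fun p => WRV K1 t p * \sum_(k < n) ((k < t)%N : nat)%:R * rs K2 (p k))).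
  rewrite (core K2 n4 t2 tn h1); ring.
by move=> p; rewrite mulrC.
Qed.


Lemma Ex_bigsum (R : rcfType) n m (F : 'I_m -> 'S_n -> R) :
  Ex (fun p => \sum_(k < m) F k p) = \sum_(k < m) Ex (F k).
Proof. by rewrite /Ex exchange_big mulr_sumr. Qed.

Lemma cen_L (R : rcfType) n m (x : 'I_m -> R) (a : 'I_m -> 'S_n -> R) p :
  (\sum_(k < m) x k * a k p) - Ex (fun p => \sum_(k < m) x k * a k p) =
  \sum_(k < m) x k * (a k p - Ex (a k)).
Proof.
rewrite Ex_bigsum.
rewrite (eq_bigr (fun k => x k * Ex (a k)) (fun k _ => Ex_scale (x k) (a k))).
by rewrite -sumrB; apply: eq_bigr => k _; rewrite mulrBr.
Qed.

Lemma Cov_Lr (R : rcfType) n m (y : 'I_m -> R) (a : 'I_m -> 'S_n -> R) (Z : 'S_n -> R) :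
  Cov Z (fun p => \sum_(l < m) y l * a l p) = \sum_(l < m) y l * Cov Z (a l).
Proof.
rewrite /Cov.
rewrite (@Ex_ext _ _ _ (fun p => \sum_(l < m) y l * ((Z p - Ex Z) * (a l p - Ex (a l))))).
  rewrite Ex_bigsum; apply: eq_bigr => l _; exact: Ex_scale.
move=> p; rewrite cen_L mulr_sumr; apply: eq_bigr => l _; ring.
Qed.

Lemma Cov_L (R : rcfType) n m (x y : 'I_m -> R) (a : 'I_m -> 'S_n -> R) :
  Cov (fun p => \sum_(k < m) x k * a k p) (fun p => \sum_(l < m) y l * a l p) =
  \sum_(k < m) \sum_(l < m) x k * y l * Cov (a k) (a l).
Proof.
rewrite Cov_Lr.
rewrite (eq_bigr (fun l => \sum_(k < m) x k * y l * Cov (a k) (a l))); last first.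
  move=> l _; rewrite Cov_sym Cov_Lr mulr_sumr; apply: eq_bigr => k _.
  rewrite Cov_sym; ring.
exact: exchange_big.
Qed.

Lemma Var_ge0 (R : rcfType) n (X : 'S_n -> R) : 0 <= Var X.
Proof.
rewrite /Var /Cov /Ex mulr_ge0 // ?invr_ge0 ?ler0n //.
by apply: sumr_ge0 => p _; rewrite -expr2 sqr_ge0.
Qed.

Lemma Var0_Cov (R : rcfType) n (X Z : 'S_n -> R) : Var X = 0 -> Cov Z X = 0.
Proof.
move=> h.
have hs : \sum_(p : 'S_n) (X p - Ex X) * (X p - Ex X) = 0.
  move: h; rewrite /Var /Cov /Ex => /eqP; rewrite mulf_eq0 invr_eq0 pnatr_eq0.
  by rewrite eqn0Ngt fact_gt0 /= => /eqP.
have hp : forall p, X p - Ex X = 0.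
  move=> p; apply/eqP; rewrite -sqrf_eq0 expr2.
  move/eqP: hs; rewrite psumr_eq0; last by move=> q _; rewrite -expr2 sqr_ge0.
  by move=> /allP /(_ p (mem_index_enum p)).
rewrite /Cov (@Ex_ext _ _ _ (fun _ => 0)); first exact: Ex_const.
by move=> p; rewrite hp mulr0.
Qed.

Lemma Var_L_pos (R : rcfType) n m (a : 'I_m -> 'S_n -> R) (x : 'I_m -> R) (k0 : 'I_m) :
  (\matrix_(k, l) Cov (a k) (a l)) \in unitmx -> x k0 != 0 ->
  0 < Var (fun p => \sum_(k < m) x k * a k p).
Proof.
move=> hU hx.
rewrite lt_def Var_ge0 andbT; apply/eqP => h0.
have hS : (\matrix_(k, l) Cov (a k) (a l)) *m (\col_l x l) = 0.
  apply/matrixP => k j; rewrite !mxE.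
  apply: (etrans _ (Var0_Cov (a k) h0)); rewrite Cov_Lr.
  by apply: eq_bigr => l _; rewrite !mxE mulrC.
have h1 : (\col_l x l : 'cV[R]_m) = 0.
  by rewrite -(mul1mx (\col_l x l)) -(mulVmx hU) -mulmxA hS mulmx0.
move/matrixP: h1 => /(_ k0 ord0); rewrite !mxE => e.
by move: hx; rewrite e eqxx.
Qed.

Lemma quad_diag (R : fieldType) m (S B : 'M[R]_m) (v : 'I_m -> R) (d : 'cV[R]_m) :
  S \in unitmx -> (forall k, v k != 0) -> B *m S *m B^T = diag_mx (\row_k v k) ->
  (d^T *m invmx S *m d) ord0 ord0 = \sum_(k < m) ((B *m d) k ord0) ^+ 2 / v k.
Proof.
move=> hS hv hD.
pose Dinv : 'M[R]_m := diag_mx (\row_k (v k)^-1).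
have hDD : Dinv *m (B *m S *m B^T) = 1%:M.
  rewrite hD mulmx_diag -diag_const_mx; congr diag_mx.
  by apply/matrixP => i j; rewrite !mxE mulVf.
have hC : (Dinv *m B *m S) *m B^T = 1%:M by rewrite -!mulmxA -hDD !mulmxA.
have hBC : B^T *m (Dinv *m B *m S) = 1%:M := mulmx1C hC.
have hM : (B^T *m Dinv *m B) *m S = 1%:M by rewrite -hBC !mulmxA.
have hinv : invmx S = B^T *m Dinv *m B.
  by rewrite -[invmx S]mul1mx -hM -(mulmxA _ S) mulmxV // mulmx1.
rewrite hinv.
have -> : d^T *m (B^T *m Dinv *m B) *m d = (B *m d)^T *m Dinv *m (B *m d).
  by rewrite trmx_mul !mulmxA.
rewrite /Dinv mul_mx_diag mxE; apply: eq_bigr => j _; rewrite !mxE; ring.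
Qed.


Definition vec4 (T : Type) (x0 x1 x2 x3 : T) (k : 'I_4) : T :=
  match val k with 0 => x0 | 1 => x1 | 2 => x2 | _ => x3 end.

Lemma sum4 (R : nmodType) (F : 'I_4 -> R) :
  \sum_(k < 4) F k = F (@Ordinal 4 0 isT) + F (@Ordinal 4 1 isT) + F (@Ordinal 4 2 isT)
    + F (@Ordinal 4 3 isT).
Proof.
rewrite !big_ord_recl big_ord0 addr0 !addrA.
do 4? congr (_ + _); congr F; apply: val_inj; reflexivity.
Qed.

Lemma Cov_lin2 (R : rcfType) n (a b c d : R) (X Y Z W : 'S_n -> R) :
  Cov (fun p => a * X p + b * Y p) (fun p => c * Z p + d * W p) =
  a * c * Cov X Z + a * d * Cov X W + b * c * Cov Y Z + b * d * Cov Y W.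
Proof.
rewrite Cov_lin (Cov_sym X) (Cov_sym Y) !Cov_lin (Cov_sym Z X) (Cov_sym W X).
rewrite (Cov_sym Z Y) (Cov_sym W Y); ring.
Qed.

Lemma Cov_Zstd (R : rcfType) n (X Y : 'S_n -> R) :
  Cov (Zstd X) (Zstd Y) = (Num.sqrt (Var X))^-1 * (Num.sqrt (Var Y))^-1 * Cov X Y.
Proof.
rewrite (@Cov_ext _ _ _ (fun p => (Num.sqrt (Var X))^-1 * X p + (- Ex X / Num.sqrt (Var X)))
   _ (fun p => (Num.sqrt (Var Y))^-1 * Y p + (- Ex Y / Num.sqrt (Var Y)))).
- by rewrite Cov_aff Cov_sym Cov_aff Cov_sym mulrA.
- by move=> p; rewrite /Zstd; ring.
- by move=> p; rewrite /Zstd; ring.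
Qed.

Lemma Zstd_ext (R : rcfType) n (X Y : 'S_n -> R) :
  (forall p, X p = Y p) -> forall p, Zstd X p = Zstd Y p.
Proof.
move=> h p; rewrite /Zstd /Var (Cov_ext h h) (Ex_ext h) h; reflexivity.
Qed.

Lemma Zstd_sq (R : rcfType) n (X : 'S_n -> R) p :
  Zstd X p ^+ 2 = (X p - Ex X) ^+ 2 / Var X.
Proof. by rewrite /Zstd expr_div_n sqr_sqrtr // Var_ge0. Qed.

Unset Implicit Arguments.

Theorem theorem1 (R : rcfType) (n : nat) (K1 K2 : 'M[R]_n) (t : nat) :
  (4 <= n)%N -> (2 <= t)%N -> (t <= n - 2)%N ->
  K1^T = K1 -> K2^T = K2 ->
  Sigma K1 K2 t \in unitmx ->
  Var (WRV K1 t) != Cov (WRV K1 t) (WRV K2 t) ->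
  Var (DRV K1 t) != Cov (DRV K1 t) (DRV K2 t) ->
  let c1 := (Var (WRV K2 t) - Cov (WRV K1 t) (WRV K2 t)) /
            (Var (WRV K1 t) - Cov (WRV K1 t) (WRV K2 t)) in
  let c2 := (Var (DRV K2 t) - Cov (DRV K1 t) (DRV K2 t)) /
            (Var (DRV K1 t) - Cov (DRV K1 t) (DRV K2 t)) in
  let WDiff := fun pi => WRV K1 t pi - WRV K2 t pi in
  let DDiff := fun pi => DRV K1 t pi - DRV K2 t pi in
  let WSum := fun pi => c1 * WRV K1 t pi + WRV K2 t pi in
  let DSum := fun pi => c2 * DRV K1 t pi + DRV K2 t pi in
  [/\ [/\ 0 < Var WDiff, 0 < Var DDiff, 0 < Var WSum & 0 < Var DSum],
      (Cov (Zstd WDiff) (Zstd DDiff) = 0 /\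
       Cov (Zstd WDiff) (Zstd WSum) = 0 /\
       Cov (Zstd WDiff) (Zstd DSum) = 0 /\
       Cov (Zstd DDiff) (Zstd WSum) = 0 /\
       Cov (Zstd DDiff) (Zstd DSum) = 0 /\
       Cov (Zstd WSum) (Zstd DSum) = 0) &
      forall pi : 'S_n,
        Sstat K1 K2 t pi =
        Zstd WDiff pi ^+ 2 + Zstd DDiff pi ^+ 2
        + Zstd WSum pi ^+ 2 + Zstd DSum pi ^+ 2].
Proof.
move=> n4 t2 tn h1 h2 hU hWne hDne c1 c2 WDiff DDiff WSum DSum.
pose pw : R := t%:R / n%:R.
pose qw : R := (n - t)%:R / n%:R.
pose ud : R := (t * (t - 1))%:R / (n * (n - 1))%:R.
pose vd : R := ((n - t) * (n - t - 1))%:R / (n * (n - 1))%:R.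
pose bv : 'I_4 -> 'I_4 -> R := fun k => match val k with
  | 0 => vec4 pw qw (- pw) (- qw)
  | 1 => vec4 ud (- vd) (- ud) vd
  | 2 => vec4 (c1 * pw) (c1 * qw) pw qw
  | _ => vec4 (c2 * ud) (- (c2 * vd)) ud (- vd) end.
pose Ys : 'I_4 -> 'S_n -> R := fun k p => \sum_(l < 4) bv k l * acomp K1 K2 t l p.
have hYs' : forall k p, vec4 WDiff DDiff WSum DSum k p = \sum_(l < 4) bv k l * acomp K1 K2 t l p.
{ move=> k p; rewrite (sum4 (fun l => bv k l * acomp K1 K2 t l p)).
  case: k => [[|[|[|[|k]]]] hk]; last by [].
  all: rewrite /acomp /bv /vec4 /=.
  all: rewrite /WDiff /DDiff /WSum /DSum /WRV /DRV /Wstat /Dstat /alphaRV /betaRV /pw /qw /ud /vd.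
  all: ring. }
have hYs : forall k p, Ys k p = vec4 WDiff DDiff WSum DSum k p := fun k p => esym (hYs' k p).
have t1 : (1 <= t)%N by apply: leq_trans t2.
have hn0 : (n%:R : R) != 0 by rewrite pnatr_eq0; lia.
have ht0 : (t%:R : R) != 0 by rewrite pnatr_eq0; lia.
have hnn : ((n * (n - 1))%:R : R) != 0 by rewrite pnatr_eq0 muln_eq0; apply/norP; split; lia.
have htt : ((t * (t - 1))%:R : R) != 0 by rewrite pnatr_eq0 muln_eq0; apply/norP; split; lia.
have pw0 : pw != 0 by rewrite /pw mulf_neq0 // invr_neq0.
have ud0 : ud != 0 by rewrite /ud mulf_neq0 // invr_neq0.
pose o0 : 'I_4 := @Ordinal 4 0 isT.
pose o1 : 'I_4 := @Ordinal 4 1 isT.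
pose o2 : 'I_4 := @Ordinal 4 2 isT.
pose o3 : 'I_4 := @Ordinal 4 3 isT.
have P0 : 0 < Var WDiff.
{ have := @Var_L_pos R n 4 (acomp K1 K2 t) (bv o0) o0 hU pw0.
  rewrite /Var (Cov_ext (hYs o0) (hYs o0)); exact. }
have P1 : 0 < Var DDiff.
{ have := @Var_L_pos R n 4 (acomp K1 K2 t) (bv o1) o0 hU ud0.
  rewrite /Var (Cov_ext (hYs o1) (hYs o1)); exact. }
have P2 : 0 < Var WSum.
{ have := @Var_L_pos R n 4 (acomp K1 K2 t) (bv o2) o2 hU pw0.
  rewrite /Var (Cov_ext (hYs o2) (hYs o2)); exact. }
have P3 : 0 < Var DSum.
{ have := @Var_L_pos R n 4 (acomp K1 K2 t) (bv o3) o2 hU ud0.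
  rewrite /Var (Cov_ext (hYs o3) (hYs o3)); exact. }
have c11 := @cov_WD R n K1 K1 t n4 t2 tn h1 h1.
have c12 := @cov_WD R n K1 K2 t n4 t2 tn h1 h2.
have c21 := @cov_WD R n K2 K1 t n4 t2 tn h2 h1.
have c22 := @cov_WD R n K2 K2 t n4 t2 tn h2 h2.
have eWD : forall p, WDiff p = 1 * WRV K1 t p + (-1) * WRV K2 t p.
  by move=> p; rewrite /WDiff; ring.
have eDD : forall p, DDiff p = 1 * DRV K1 t p + (-1) * DRV K2 t p.
  by move=> p; rewrite /DDiff; ring.
have eWS : forall p, WSum p = c1 * WRV K1 t p + 1 * WRV K2 t p.
  by move=> p; rewrite /WSum; ring.
have eDS : forall p, DSum p = c2 * DRV K1 t p + 1 * DRV K2 t p.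
  by move=> p; rewrite /DSum; ring.
have hW' : Cov (WRV K1 t) (WRV K1 t) - Cov (WRV K1 t) (WRV K2 t) != 0.
  by rewrite subr_eq0.
have hD' : Cov (DRV K1 t) (DRV K1 t) - Cov (DRV K1 t) (DRV K2 t) != 0.
  by rewrite subr_eq0.
have f01 : Cov WDiff DDiff = 0.
  by rewrite (Cov_ext eWD eDD) Cov_lin2 c11 c12 c21 c22; ring.
have f02 : Cov WDiff WSum = 0.
  rewrite (Cov_ext eWD eWS) Cov_lin2 (Cov_sym (WRV K2 t) (WRV K1 t)) /c1 /Var.
  by field.
have f03 : Cov WDiff DSum = 0.
  by rewrite (Cov_ext eWD eDS) Cov_lin2 c11 c12 c21 c22; ring.
have f12 : Cov DDiff WSum = 0.
  by rewrite Cov_sym (Cov_ext eWS eDD) Cov_lin2 c11 c12 c21 c22; ring.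
have f13 : Cov DDiff DSum = 0.
  rewrite (Cov_ext eDD eDS) Cov_lin2 (Cov_sym (DRV K2 t) (DRV K1 t)) /c2 /Var.
  by field.
have f23 : Cov WSum DSum = 0.
  by rewrite (Cov_ext eWS eDS) Cov_lin2 c11 c12 c21 c22; ring.
have hoff : forall k l : 'I_4, k != l -> Cov (Ys k) (Ys l) = 0.
{ move=> k l; rewrite (Cov_ext (hYs k) (hYs l)).
  case: k => [[|[|[|[|k]]]] hk]; case: l => [[|[|[|[|l]]]] hl]; rewrite /vec4 /=.
  all: move=> hkl.
  all: first [ exact f01 | exact f02 | exact f03 | exact f12 | exact f13 | exact f23
     | (rewrite Cov_sym; first [ exact f01 | exact f02 | exact f03 | exact f12 | exact f13 | exact f23])
     | (exfalso; move: hkl; rewrite /eq_op /=; done) | done ]. }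
pose B : 'M[R]_4 := \matrix_(k, l) bv k l.
have hDmat : B *m Sigma K1 K2 t *m B^T = diag_mx (\row_k Var (Ys k)).
{ apply/matrixP => k l.
  have e : (B *m Sigma K1 K2 t *m B^T) k l = Cov (Ys k) (Ys l).
    rewrite (Cov_L (bv k) (bv l) (acomp K1 K2 t)) mxE.
    rewrite (eq_bigr (fun j => \sum_(i < 4) bv k i * bv l j * Cov (acomp K1 K2 t i) (acomp K1 K2 t j)));
      first exact: exchange_big.
    move=> j _; rewrite !mxE mulr_suml; apply: eq_bigr => i _; rewrite !mxE; ring.
  rewrite e mxE; case: (eqVneq k l) => [->|h].
    by rewrite mulr1n mxE.
  by rewrite mulr0n hoff. }
have hv : forall k, Var (Ys k) != 0.
{ move=> k; apply: lt0r_neq0; rewrite /Var (Cov_ext (hYs k) (hYs k)).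
  case: k => [[|[|[|[|k]]]] hk]; rewrite /vec4 /=.
  all: first [exact P0 | exact P1 | exact P2 | exact P3 | done]. }
split.
- by split.
- rewrite !Cov_Zstd f01 f02 f03 f12 f13 f23 !mulr0.
  by do !split.
- move=> pi; rewrite /Sstat.
  rewrite (quad_diag _ hU hv hDmat).
  rewrite (eq_bigr (fun k => Zstd (Ys k) pi ^+ 2)).
    rewrite (sum4 (fun k => Zstd (Ys k) pi ^+ 2)).
    rewrite (Zstd_ext (hYs o0) pi) (Zstd_ext (hYs o1) pi) (Zstd_ext (hYs o2) pi) (Zstd_ext (hYs o3) pi).
    reflexivity.
  move=> k _; rewrite Zstd_sq; congr (_ ^+ 2 / _).
  rewrite mxE; apply: (etrans _ (esym (cen_L (bv k) (acomp K1 K2 t) pi))).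
  apply: eq_bigr => j _; rewrite !mxE; reflexivity.
Qed.
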